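(* Let $X$ be a Tychonoff space and $\mathcal{H}$ a subspace with $\mathcal{F}_2(X)\subset\mathcal{H}\subset\mathcal{K}(X)$. If $\mathcal{H}$ is an $F'$-space, then $X$ is a $P$-space.
   Context: $\mathcal{K}(X)$ is the set of nonempty compact subsets of $X$ with the Vietoris topology (generated by $U^+=\{A: A\subset U\}$ and $U^-=\{A: A\cap U\neq\emptyset\}$ for $U$ open in $X$), and $\mathcal{F}_2(X)$ its subspace of nonempty subsets with at most $2$ points. A $P$-space is a space in which every point lies in the interior of every $G_\delta$ set containing it. A cozero set is the complement of a zero set $f^{-1}(0)$ of a continuous real-valued function; an $F'$-space is a Tychonoff space in which any two disjoint cozero sets have disjoint closures. *)

(* Defs.v *)
From HB Require Import structures.
From mathcomp Require Import all_boot all_order all_algebra.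
From mathcomp Require Import all_classical all_reals.
From mathcomp Require Import topology normedtype borel_hierarchy.
From mathcomp Require Import subspace_topology subtype_topology.

Set Implicit Arguments.
Unset Strict Implicit.
Unset Printing Implicit Defensive.
Import Order.TTheory GRing.Theory Num.Theory.
Import numFieldNormedType.Exports.
Local Open Scope classical_set_scope.
Local Open Scope ring_scope.

Definition tychonoff_space (R : realType) (T : topologicalType) : Prop :=
  accessible_space T /\
  forall (x : T) (B : set T), closed B -> ~ B x ->
    exists f : T -> R, [/\ continuous f, f x = 0 & forall b, B b -> f b = 1].

Definition cozero (R : realType) (T : Type) (f : T -> R) : set T :=
  [set x | f x != 0].

Definition F'_space (R : realType) (T : topologicalType) : Prop :=
  tychonoff_space R T /\
  forall f g : T -> R, continuous f -> continuous g ->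
    cozero f `&` cozero g = set0 ->
    closure (cozero f) `&` closure (cozero g) = set0.

Definition P_space (T : topologicalType) : Prop :=
  forall (G : set T) (x : T), Gdelta G -> G x -> (G°) x.

(** The Vietoris topology on the type of all subsets of X, generated by the
    subbase  U^+ = [set A | A `<=` U]  and  U^- = [set A | A `&` U !=set0]
    for U open in X.  K(X) and F_2(X) then carry the subspace topology. *)
Definition vietoris (X : topologicalType) : Type := set X.

HB.instance Definition _ (X : topologicalType) :=
  Choice.on (vietoris X).

Definition vietoris_subbase (X : topologicalType) (i : bool * set X)
  : set (vietoris X) :=
  if i.1 then [set A : set X | A `<=` i.2]
  else [set A : set X | A `&` i.2 !=set0].

HB.instance Definition _ (X : topologicalType) :=
  isSubBaseTopological.Build (vietoris X)
    [set i : bool * set X | open i.2] (@vietoris_subbase X).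

Definition Kspace (X : topologicalType) : set (vietoris X) :=
  [set A : set X | compact A /\ A !=set0].

Definition F2space (X : topologicalType) : set (vietoris X) :=
  [set A : set X | exists x y : X, A = [set x; y]].

Arguments Kspace X : clear implicits.
Arguments F2space X : clear implicits.
Arguments P_space T : clear implicits.

(* Main.v *)
Require Import Defs.
From HB Require Import structures.
From mathcomp Require Import all_boot all_order all_algebra.
From mathcomp Require Import all_classical all_reals.
From mathcomp Require Import topology normedtype borel_hierarchy.
From mathcomp Require Import subspace_topology subtype_topology.
From mathcomp Require Import finmap.
Local Open Scope classical_set_scope.
Import numFieldNormedType.Exports.
Set Implicit Arguments.
Unset Strict Implicit.
Unset Printing Implicit Defensive.
From mathcomp Require Import lra ring.
Lemma viet_nbhs (X : topologicalType) (O : set (vietoris X)) (x : X) :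
  open O -> O [set x] ->
  exists N : set X, nbhs x N /\ forall y z, N y -> N z -> O [set y; z].
Proof.
move=> [D' sD' <-] [k D'k kx].
have [F sF kE] : exists2 F : {fset (bool * set X)},
   (forall i, i \in F -> open i.2) &
   \bigcap_(i in [set` F]) vietoris_subbase i = k.
  have [F sF kE] := sD' k D'k.
  by exists F => // i /sF /set_mem.
exists (\bigcap_(i in [set` F]) i.2); split.
  apply: filter_bigI => i iF.
  have oi := sF i iF.
  have := kx; rewrite -kE => /(_ i iF); rewrite /vietoris_subbase.
  case: i iF oi => [[] U] /= _ oU.
    by move=> /(_ x erefl) Ux; apply: open_nbhs_nbhs.
  by move=> [z [-> Uz]]; apply: open_nbhs_nbhs.
move=> y z Ny Nz; exists k => //; change (k [set y; z]); rewrite -kE => i iF.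
have := Ny i iF; have := Nz i iF; rewrite /vietoris_subbase.
case: i iF => [[] U] /= _ Uz Uy.
  by move=> w [->|->].
by exists y; split => //; left.
Qed.
Local Open Scope ring_scope.
Import Order.TTheory GRing.Theory Num.Theory.

Lemma set_val_cont (X : topologicalType) (H : set (vietoris X)) :
  continuous (@set_val _ H : set_type H -> vietoris X).
Proof. exact: initial_continuous. Qed.

Lemma viet_sub_open (X : topologicalType) (i : bool * set X) :
  open i.2 -> open (vietoris_subbase i).
Proof.
move=> oi; exists [set vietoris_subbase i].
  move=> _ ->; exists [fset i]%fset.
    by move=> j; rewrite inE => /eqP ->; rewrite in_setE.
  apply/seteqP; split=> A.
    by move=> /(_ i); apply; rewrite /= inE.
  by move=> Ai j; rewrite /= inE => /eqP ->.
apply/seteqP; split=> A; first by move=> [_ -> ].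
by move=> Ai; exists (vietoris_subbase i).
Qed.

Lemma sup_ge (R : realType) (E : set R) (c r : R) :
  (forall y, E y -> y <= c) -> E r -> r <= sup E.
Proof. by move=> ub Er; apply: ub_le_sup => //; exists c. Qed.

Lemma sup_leP (R : realType) (E : set R) (c : R) :
  E !=set0 -> (forall y, E y -> y <= c) -> sup E <= c.
Proof. by move=> E0 ub; apply: ge_sup. Qed.

Definition supf (R : realType) (X : topologicalType) (f : X -> R) (A : set X) :=
  sup (f @` A).

Lemma supf_cont (R : realType) (X : topologicalType) (H : set (vietoris X))
  (f : X -> R) : continuous f -> (forall y, 0 <= f y <= 1) ->
  (forall A, H A -> A !=set0) ->
  continuous (fun A : set_type H => supf f (set_val A)).
Proof.
move=> fc f01 HA p; apply/(@cvgrPdist_lt _ _ _ (nbhs p) (nbhs_filter p)) => e e0.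
set A := set_val p.
have A0 : A !=set0 by apply: HA; exact: set_mem (valP p).
have ub1 (B : set X) : forall y, (f @` B) y -> y <= 1.
  by move=> _ [b _ <-]; have /andP[] := f01 b.
have hs : has_sup (f @` A).
  by split; [case: A0 => a Aa; exists (f a), a | exists 1 => y /ub1].
set s := supf f A.
have e2 : 0 < e / 2 by rewrite divr_gt0.
have [fa [a Aa <-] Ha] := sup_adherent e2 hs.
pose O1 := vietoris_subbase (true, f @^-1` [set r | r < s + e / 2]).
pose O2 := vietoris_subbase (false, f @^-1` [set r | s - e / 2 < r]).
have oO : open (O1 `&` O2).
  apply: openI; apply: viet_sub_open => /=; apply: (proj1 (continuousP f) fc).
    exact: open_lt.
  exact: open_gt.
have OA : (O1 `&` O2) A.
  split.
    move=> b Ab /=. 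
    have : f b <= s by apply: sup_ge (ub1 A) _; exists b.
    by move=> h; apply: (le_lt_trans h); rewrite ltrDl.
  by exists a; split => //=.
have hn : nbhs (set_val p) (O1 `&` O2).
  by apply: open_nbhs_nbhs; split.
have hq := @set_val_cont X H p _ hn.
apply: (@filterS _ _ (nbhs_filter p) _ _ _ hq) => q /= [O1q [b [qb fb]]].
have q0 : set_val q !=set0 by apply: HA; exact: set_mem (valP q).
have h1 : supf f (set_val q) <= s + e / 2.
  apply: sup_leP; first by case: q0 => c qc; exists (f c), c.
  by move=> _ [c qc <-]; apply/ltW; apply: O1q.
have h2 : s - e / 2 < supf f (set_val q).
  move: fb => /= fb.
  by apply: (lt_le_trans fb); apply: sup_ge (ub1 _) _; exists b.
rewrite ltr_norml; apply/andP; split; lra.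
Qed.

Lemma minr1_lip (R : realType) (a b : R) :
  `|Num.min a 1 - Num.min b 1| <= `|a - b|.
Proof.
have := ler_norm (a - b); have := ler_norm (b - a); rewrite distrC => h1 h2.
rewrite ler_norml.
case: (leP a 1) => ha; case: (leP b 1) => hb;
  rewrite ?(minEle, minElt) ?ha ?hb //=; try (rewrite (ltW ha)); try (rewrite (ltW hb));
  apply/andP; split; lra.
Qed.

Lemma exists_inv_lt (R : realType) (d : R) : 0 < d -> exists M : nat, M.+1%:R^-1 < d.
Proof.
move=> d0; exists (Num.trunc d^-1).
rewrite -[X in _ < X]invrK ltf_pV2 ?posrE ?invr_gt0 //; exact: truncnS_gt.
Qed.

Lemma clamp_cont (R : realType) (T : topologicalType) (g : T -> R) :
  continuous g -> continuous (fun y => Num.min `|g y| 1).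
Proof.
move=> gc p; apply/(@cvgrPdist_lt _ _ _ (nbhs p) (nbhs_filter p)) => e e0.
have := proj1 (@cvgrPdist_lt _ _ _ (nbhs p) (nbhs_filter p) g (g p)) (gc p) e e0.
apply: (@filterS _ _ (nbhs_filter p)) => q hq.
apply: le_lt_trans (minr1_lip _ _) _.
by apply: le_lt_trans hq; apply: ler_dist_dist.
Qed.

Lemma reduce (R : realType) (X : topologicalType) (G : set X) (x : X) :
  tychonoff_space R X -> Gdelta G -> G x -> ~ (G°) x ->
  exists f : X -> R, [/\ continuous f, (forall y, 0 <= f y <= 1), f x = 0 &
    forall N, nbhs x N -> exists2 y, N y & 0 < f y].
Proof.
move=> [_ tych] [F oF GE] Gx nGx.
have hex n : exists h : X -> R, [/\ continuous h, (forall y, 0 <= h y <= 1),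
    h x = 0 & forall y, ~ F n y -> h y = 1].
  have Fnx : F n x by move: Gx; rewrite GE; apply.
  have [g [gc gx g1]] := tych x (~` F n) (open_closedC (oF n)) (fun nx => nx Fnx).
  exists (fun y => Num.min `|g y| 1); split.
  - exact: clamp_cont.
  - by move=> y; rewrite le_min normr_ge0 ler01 /= ge_min lexx orbT.
  - by rewrite gx normr0 minEle ler01.
  - by move=> y /g1 ->; rewrite normr1 minxx.
have /choice [h hP] := hex.
pose w (n : nat) : R := n.+1%:R^-1.
pose E y := [set w n * h n y | n in [set: nat]].
pose f y := sup (E y).
have w01 n : 0 < w n <= 1.
  by rewrite invr_gt0 ltr0n /= invf_le1 ?ler1n // ltr0n.
have hE y r : E y r -> 0 <= r <= 1.
  move=> [n _ <-]; have [_ /(_ y) /andP[h0 h1] _ _] := hP n.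
  have /andP[w0 w1] := w01 n.
  by rewrite mulr_ge0 ?(ltW w0) //= mulr_ile1 ?(ltW w0).
have Ene y : E y !=set0 by exists (w 0%N * h 0%N y), 0%N.
have ub y : forall r, E y r -> r <= 1 by move=> r /hE /andP[].
have f01 y : 0 <= f y <= 1.
  apply/andP; split; last exact: sup_leP (Ene y) (ub y).
  have e0 : E y (w 0%N * h 0%N y) by exists 0%N.
  by apply: le_trans (sup_ge (ub y) e0); have /andP[] := hE _ _ e0.
have fx : f x = 0.
  apply/eqP; rewrite eq_le; apply/andP; split; last by have /andP[] := f01 x.
  apply: sup_leP (Ene x) _ => _ [n _ <-]; have [_ _ -> _] := hP n.
  by rewrite mulr0.
exists f; split => //; last first.
  move=> N Nx; have : ~ (N `<=` G).
    by move=> NG; apply: nGx; exact: filterS NG Nx.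
  move=> /existsNP [y] /not_implyP [Ny nGy].
  exists y => //; rewrite GE in nGy; move: nGy => /existsNP [n] /not_implyP [_ nFn].
  have [_ _ _ h1] := hP n.
  have e : E y (w n * h n y) by exists n.
  apply: lt_le_trans (sup_ge (ub y) e).
  by rewrite h1 // mulr1; have /andP[] := w01 n.
move=> p; apply/(@cvgrPdist_lt _ _ _ (nbhs p) (nbhs_filter p)) => e e0.
have e2 : 0 < e / 2 by rewrite divr_gt0.
have [M hM] := exists_inv_lt e2.
have key y z : (forall n, (n < M)%N -> `|h n y - h n z| < e / 2) ->
    f y <= f z + e / 2.
  move=> hyz; apply: sup_leP (Ene y) _ => _ [n _ <-].
  have [_ hh _ _] := hP n; have /andP[hy0 hy1] := hh y.
  have /andP[hz0 hz1] := hh z; have /andP[w0 w1] := w01 n.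
  have ez : E z (w n * h n z) by exists n.
  have fz := sup_ge (ub z) ez.
  have fz0 : 0 <= f z by have /andP[] := f01 z.
  case: (ltnP n M) => nM.
    have := hyz n nM; rewrite ltr_norml => /andP[_ d].
    have hw : w n * (h n y - h n z) <= e / 2.
      case: (leP (h n y - h n z) 0) => dn.
        by apply: le_trans (mulr_ge0_le0 (ltW w0) dn) _; apply: ltW.
      by apply: le_trans (ltW d); apply: ler_piMl => //; apply: ltW.
    have -> : w n * h n y = w n * h n z + w n * (h n y - h n z) by ring.
    move: hw fz; rewrite /f; move: (w n * h n z) (w n * (h n y - h n z)) (sup (E z)) => a b c.
    lra.
  have wnM : w n <= w M by rewrite /w lef_pV2 ?posrE // ler_nat.
  have : w n * h n y <= w n by apply: ler_piMr => //; apply: ltW.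
  move: wnM hM fz0; rewrite -/(w M) /f; move: (w n * h n y) (w n) (w M) (sup (E z)) => a b c g.
  lra.
have nearM m : \forall q \near p, forall n, (n < m)%N -> `|h n p - h n q| < e / 2.
  elim: m => [|m IH]; first by apply: filterE => q n; rewrite ltn0.
  have [hc _ _ _] := hP m.
  have := proj1 (@cvgrPdist_lt _ _ _ (nbhs p) (nbhs_filter p) (h m) (h m p)) (hc p) _ e2.
  move=> hm; apply: (@filterS _ _ (nbhs_filter p) _ _ _ (filterI IH hm)).
  move=> q [H1 H2] n; rewrite ltnS leq_eqVlt => /orP[/eqP ->|/H1] //.
apply: (@filterS _ _ (nbhs_filter p) _ _ _ (nearM M)) => q hq.
have k1 := key p q hq.
have k2 : f q <= f p + e / 2 by apply: key => n /hq; rewrite distrC.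
rewrite ltr_norml; apply/andP; split; lra.
Qed.

Lemma comb_cont (R : realType) (T : topologicalType) (s t : T -> R) :
  continuous s -> continuous t ->
  continuous (fun A => (1 - t A) + (1 - t A) - s A) /\
  continuous (fun A => `|(1 - t A) + (1 - t A) - s A|).
Proof.
move=> sc tc.
have c1 : continuous (fun A => (1 - t A) + (1 - t A) - s A).
  move=> p; apply: cvgB; last exact: sc.
  by apply: cvgD; apply: cvgB; [exact: cvg_cst | exact: tc | exact: cvg_cst | exact: tc].
split => // p; exact: cvg_norm (c1 p).
Qed.

Lemma set_valK (X : topologicalType) (H : set (vietoris X)) (A : vietoris X) (h : A \in H) :
  set_val (exist _ A h : set_type H) = A.
Proof. by []. Qed.

Lemma supf_pair_ge (R : realType) (X : topologicalType) (f : X -> R) (a b : X) :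
  (forall y, 0 <= f y <= 1) -> f a <= supf f [set a; b] /\ f b <= supf f [set a; b].
Proof.
move=> f01; have ub : forall r, (f @` [set a; b]) r -> r <= 1.
  by move=> _ [c _ <-]; have /andP[] := f01 c.
by split; apply: sup_ge ub _; [exists a; [left|] | exists b; [right|]].
Qed.

Lemma supf_single_le (R : realType) (X : topologicalType) (f : X -> R) (a : X) :
  supf f [set a; a] <= f a.
Proof.
apply: sup_leP; first by exists (f a), a; [left|].
by move=> _ [c [->|->] <-].
Qed.

Unset Implicit Arguments.

Theorem proposition3p6 (R : realType) (X : topologicalType)
  (H : set (vietoris X)) :
  tychonoff_space R X ->
  F2space X `<=` H -> H `<=` Kspace X ->
  F'_space R (set_type H) ->
  P_space X.
Proof.
move=> tX F2H HK [_ F'H] G x GG Gx.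
case: (pselect ((G°) x)) => // nGx; exfalso.
have [f [fc f01 fx fN]] := reduce tX GG Gx nGx.
have HA : forall A, H A -> A !=set0 by move=> A /HK [].
pose f' := fun y => 1 - f y.
have f'c : continuous f'.
  by move=> p; apply: cvgB; [exact: cvg_cst | exact: fc].
have f'01 y : 0 <= f' y <= 1.
  by rewrite /f'; have /andP[a b] := f01 y; apply/andP; split; lra.
pose s := fun A : set_type H => supf f (set_val A).
pose t := fun A : set_type H => supf f' (set_val A).
have sc : continuous s := supf_cont fc f01 HA.
have tc : continuous t := supf_cont f'c f'01 HA.
have [e1c ae1c] := comb_cont sc tc.
pose e1 := fun A => (1 - t A) + (1 - t A) - s A.
pose g1 := fun A => e1 A + `|e1 A|.
pose g2 := fun A => - e1 A + `|e1 A|.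
have g1c : continuous g1.
  by move=> p; exact: (cvgD (e1c p) (ae1c p)).
have g2c : continuous g2.
  by move=> p; exact: (cvgD (cvgN (e1c p)) (ae1c p)).
have disj : cozero g1 `&` cozero g2 = set0.
  apply/seteqP; split => // q [] /=; rewrite /cozero /= /g1 /g2.
  case: (leP 0 (e1 q)) => h.
    by rewrite (ger0_norm h) addNr eqxx.
  by rewrite (ltr0_norm h) subrr eqxx.
have mkH (a b : X) : [set a; b] \in H by apply/mem_set/F2H; exists a, b.
pose p : set_type H := exist _ [set x; x] (mkH x x).
have clos (g : set_type H -> R) :
   (forall y, 0 < f y -> exists a b, [/\ a = x \/ a = y, b = x \/ b = y &
       cozero g (exist _ [set a; b] (mkH a b))]) ->
   closure (cozero g) p.
  move=> hg B; rewrite nbhsE => -[C [oC Cp] CB].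
  have [O oO OC] := oC.
  have Ox : O [set x].
    by rewrite -(setUid [set x]); rewrite -OC in Cp; exact: Cp.
  have [N [Nx hN]] := viet_nbhs oO Ox.
  have [y Ny fy] := fN N Nx.
  have [a [b [ha hb ga]]] := hg y fy.
  exists (exist _ [set a; b] (mkH a b)); split => //.
  apply: CB; rewrite -OC /=; apply: hN.
    by case: ha => ->; [exact: nbhs_singleton Nx | exact: Ny].
  by case: hb => ->; [exact: nbhs_singleton Nx | exact: Ny].
have c1 : closure (cozero g1) p.
  apply: clos => y fy; exists y, y; split; [by right|by right|].
  have he : 0 < e1 (exist _ [set y; y] (mkH y y)).
    rewrite /e1 /s /t /=.
    have := supf_single_le f y; have := supf_single_le f' y; rewrite /f'.
    lra.
  rewrite /cozero /= /g1 (gtr0_norm he); apply: lt0r_neq0.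
  by rewrite addr_gt0.
have c2 : closure (cozero g2) p.
  apply: clos => y fy; exists x, y; split; [by left|by right|].
  have he : e1 (exist _ [set x; y] (mkH x y)) < 0.
    rewrite /e1 /s /t /=.
    have [_ h1] := supf_pair_ge x y f01; have [h2 _] := supf_pair_ge x y f'01.
    move: h2; rewrite /f' fx.
    lra.
  rewrite /cozero /= /g2 (ltr0_norm he); apply: lt0r_neq0.
  by rewrite addr_gt0 // oppr_gt0.
have E := F'H g1 g2 g1c g2c disj.
by have : (closure (cozero g1) `&` closure (cozero g2)) p by [];
  rewrite E.
Qed.
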